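(* Let $G=(V,E,w)$ be a revenue instance on $|V|=n$ data points with weights $w_{ij}\in[0,1]$, and let $T^O$ be a binary HC tree maximizing $rev_G$. Then for any $\epsilon>0$ there exists an HC tree $\tilde T$ on $V$ such that (i) $\tilde T$ contains $\Theta(1/\epsilon)$ internal nodes, each with at most $3\epsilon n$ children, and (ii) $rev_G(\tilde T)\ge (1-19\epsilon)\,rev_G(T^O)$.
   Context: An HC tree on a set $V$ of $n$ data points is a rooted tree whose leaves are in bijective correspondence with $V$. For data points $i,j$, $T_{ij}$ denotes the subtree rooted at the lowest common ancestor of $i$ and $j$ in $T$, and $|T_{ij}|$ is its number of leaves. For a weighted graph $G=(V,E,w)$ with similarity weights $w_{ij}\in[0,1]$ (absent edges have weight $0$), the revenue of an HC tree $T$ is $rev_G(T)=\sum_{i<j} w_{ij}(n-|T_{ij}|)$; this same formula is used for non-binary trees. *)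

(* Defs.v *)
From HB Require Import structures.
From mathcomp Require Import all_boot all_order all_algebra.
Set Implicit Arguments. Unset Strict Implicit. Unset Printing Implicit Defensive.
Import Order.TTheory GRing.Theory Num.Theory.

Inductive tree (T : Type) : Type :=
| Leaf of T
| Node of seq (tree T).
Arguments Leaf {T}.
Arguments Node {T}.

Section Trees.
Variable n : nat.
Notation V := 'I_n.

Fixpoint leaves (t : tree V) : seq V :=
  match t with
  | Leaf x => [:: x]
  | Node ts =>
      (fix go (ts : seq (tree V)) : seq V :=
         match ts with [::] => [::] | c :: cs => leaves c ++ go cs end) ts
  end.

Fixpoint all_nodes (P : seq (tree V) -> bool) (t : tree V) : bool :=
  match t with
  | Leaf _ => true
  | Node ts =>
      P ts &&
      (fix go (ts : seq (tree V)) : bool :=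
         match ts with [::] => true | c :: cs => all_nodes P c && go cs end) ts
  end.

Fixpoint num_internal (t : tree V) : nat :=
  match t with
  | Leaf _ => 0
  | Node ts =>
      ((fix go (ts : seq (tree V)) : nat :=
         match ts with [::] => 0 | c :: cs => num_internal c + go cs end) ts).+1
  end.

Definition is_hc_tree (t : tree V) : bool :=
  perm_eq (leaves t) (enum 'I_n) && all_nodes (fun ts => size ts != 0) t.

Definition is_binary (t : tree V) : bool :=
  all_nodes (fun ts => size ts == 2) t.

(* |T_ij|: number of leaves of the subtree rooted at the lowest common
   ancestor of i and j (descend into the child containing both, if any). *)
Fixpoint lca_size (i j : V) (t : tree V) : nat :=
  match t with
  | Leaf _ => 1
  | Node ts =>
      odflt (size (leaves t))
        ((fix go (ts : seq (tree V)) : option nat :=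
            match ts with
            | [::] => None
            | c :: cs =>
                if (i \in leaves c) && (j \in leaves c)
                then Some (lca_size i j c) else go cs
            end) ts)
  end.

Definition hc_rev (R : pzRingType) (w : V -> V -> R) (t : tree V) : R :=
  \sum_(i < n) \sum_(j < n | (i < j)%N) w i j * (n - lca_size i j t)%:R.

End Trees.

(* Main.v *)
Require Import Defs.
From HB Require Import structures.
From mathcomp Require Import all_boot all_order all_algebra.
Import Order.TTheory GRing.Theory Num.Theory.
From mathcomp Require Import zify ring lra.
Set Implicit Arguments. Unset Strict Implicit. Unset Printing Implicit Defensive.

Lemma allIn (T : Type) (p : pred T) s : all p s <-> (forall x, List.In x s -> p x).
Proof.
elim: s => [|y s IH] /=; first by split.
split.
- by case/andP => py /IH H x [<-|/H].
- move=> H; rewrite H /=; last by left.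
  by apply/IH => x xs; apply: H; right.
Qed.

Section Gen.
Variable n : nat.
Notation V := 'I_n.
Implicit Types (t T l r : tree V) (i j x : V) (acc : seq V) (ts : seq (tree V)).

Section Ind.
Variable P : tree V -> Prop.
Hypothesis HL : forall x, P (Leaf x).
Hypothesis HN : forall ts, (forall c, List.In c ts -> P c) -> P (Node ts).
Fixpoint tree_ind' (t : tree V) : P t :=
  match t with
  | Leaf x => HL x
  | Node ts => @HN ts
      ((fix go (l : seq (tree V)) : forall c, List.In c l -> P c :=
         match l return forall c, List.In c l -> P c with
         | [::] => fun c (H : False) => False_ind _ H
         | c0 :: cs => fun c H =>
             match H with
             | or_introl E => eq_ind c0 P (tree_ind' c0) c E
             | or_intror H' => go cs c H'
             end
         end) ts)
  end.
End Ind.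

Lemma leavesE ts : leaves (Node ts) = flatten (map (@leaves n) ts).
Proof. by elim: ts => //= c cs ->. Qed.

Lemma all_nodesE P (ts : seq (tree V)) : all_nodes P (Node ts) = P ts && all (all_nodes P) ts.
Proof. rewrite /=; congr (_ && _); by elim: ts => //= c cs ->. Qed.

Lemma num_internalE ts : num_internal (Node ts) = (sumn (map (@num_internal n) ts)).+1.
Proof. rewrite /=; congr S; by elim: ts => //= c cs ->. Qed.

Definition lgo (i j : V) :=
  fix go (ts : seq (tree V)) : option nat :=
            match ts with
            | [::] => None
            | c :: cs =>
                if (i \in leaves c) && (j \in leaves c)
                then Some (lca_size i j c) else go cs
            end.

Lemma lcaE i j ts : lca_size i j (Node ts) = odflt (size (leaves (Node ts))) (lgo i j ts).
Proof. by []. Qed.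

Definition flat (s : seq V) : tree V := Node (map Leaf s).

Lemma leaves_flat s : leaves (flat s) = s.
Proof. by rewrite /flat leavesE; elim: s => //= x s ->. Qed.

Lemma ni_flat s : num_internal (flat s) = 1%N.
Proof. by rewrite /flat num_internalE; elim: s. Qed.

Lemma all_nodes_flat P s : all_nodes P (flat s) = P (map Leaf s).
Proof. rewrite /flat all_nodesE (_ : all _ _ = true) ?andbT //; by elim: s. Qed.

Lemma all_nodes_mono (P Q : pred (seq (tree V))) t :
  (forall ts, P ts -> Q ts) -> all_nodes P t -> all_nodes Q t.
Proof.
move=> PQ; elim/tree_ind': t => [x|ts IH] //.
rewrite !all_nodesE => /andP[/PQ -> /allIn H] /=.
apply/allIn => c cin; apply: IH (H c cin) => //.
Qed.


Inductive subt (s : tree V) : tree V -> Prop :=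
| subt_refl : subt s s
| subt_step ts c : List.In c ts -> subt s c -> subt s (Node ts).

Lemma subt_trans a b c : subt a b -> subt b c -> subt a c.
Proof.
move=> ab bc; elim: bc => // ts d din _ IH; exact: subt_step din IH.
Qed.

Lemma subt_child ts c : List.In c ts -> subt c (Node ts).
Proof. move=> H; exact: subt_step H (subt_refl _). Qed.

Lemma size_leaves_child (ts : seq (tree V)) c : List.In c ts ->
  (size (leaves c) <= size (leaves (Node ts)))%N.
Proof.
rewrite leavesE; elim: ts => //= d ds IH [<-|/IH H].
  by rewrite size_cat leq_addr.
by rewrite size_cat (leq_trans H) // leq_addl.
Qed.

Lemma mem_leaves_child (ts : seq (tree V)) c (x : V) : List.In c ts -> x \in leaves c -> x \in leaves (Node ts).
Proof.
rewrite leavesE; elim: ts => //= d ds IH [<-|/IH H] xc; rewrite mem_cat ?xc //.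
by rewrite H ?orbT.
Qed.

Lemma lgo_some (i j : V) ts k : lgo i j ts = Some k -> exists c, List.In c ts /\ k = lca_size i j c.
Proof.
elim: ts => //= c cs IH; case: ifP => _.
  by case=> <-; exists c; split => //; left.
by case/IH => d [din ->]; exists d; split => //; right.
Qed.

Lemma lca_le (i j : V) t : (lca_size i j t <= size (leaves t))%N.
Proof.
elim/tree_ind': t => [x|ts IH] //.
rewrite lcaE; case E: lgo => [k|] //=.
case/lgo_some: E => c [cin ->].
exact: leq_trans (IH c cin) (size_leaves_child cin).
Qed.

Lemma lgo_in (i j : V) ts c : uniq (flatten (map (@leaves n) ts)) -> List.In c ts ->
  i \in leaves c -> j \in leaves c -> lgo i j ts = Some (lca_size i j c).
Proof.
elim: ts => //= d ds IH; rewrite cat_uniq => /and3P[ud dis uds] [<-|cin] ic jc.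
  by rewrite ic jc.
case: ifP => [/andP[id _]|_]; last exact: IH.
have : i \in flatten (map (@leaves n) ds).
  by move: (mem_leaves_child cin ic); rewrite leavesE.
by move/(hasPn dis); rewrite id.
Qed.

Lemma subt_mem s t (x : V) : subt s t -> x \in leaves s -> x \in leaves t.
Proof. elim=> // ts c cin _ IH /IH; exact: mem_leaves_child. Qed.

Lemma uniq_child (ts : seq (tree V)) c : uniq (leaves (Node ts)) -> List.In c ts -> uniq (leaves c).
Proof.
rewrite leavesE; elim: ts => //= d ds IH; rewrite cat_uniq => /and3P[ud _ uds] [<-|]//.
exact: IH.
Qed.

Lemma lemmaB (i j : V) t s : uniq (leaves t) -> subt s t ->
  i \in leaves s -> j \in leaves s -> (lca_size i j t <= size (leaves s))%N.
Proof.
move=> ut st iS jS; elim: st ut => [|ts c cin sc IH] ut; first exact: lca_le.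
rewrite lcaE (@lgo_in i j ts c) //=.
- exact: IH (uniq_child ut cin).
- by rewrite -leavesE.
- exact: subt_mem iS.
- exact: subt_mem jS.
Qed.

Section BInd.
Variable P : tree V -> Prop.
Hypothesis HL : forall x, P (Leaf x).
Hypothesis HB : forall l r, P l -> P r -> P (Node [:: l; r]).
Hypothesis HO : forall ts, size ts != 2 -> P (Node ts).
Fixpoint bin_ind (t : tree V) : P t :=
  match t with
  | Leaf x => HL x
  | Node [:: l; r] => HB (bin_ind l) (bin_ind r)
  | Node ts => @HO ts isT
  end.
End BInd.

Lemma binE (l r : tree V) : is_binary (Node [:: l; r]) = is_binary l && is_binary r.
Proof. by rewrite /is_binary all_nodesE /= andbT. Qed.

Lemma bin_other (ts : seq (tree V)) : size ts != 2 -> is_binary (Node ts) = false.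
Proof. by rewrite /is_binary all_nodesE => /negbTE ->. Qed.

Lemma leaves2 (l r : tree V) : leaves (Node [:: l; r]) = leaves l ++ leaves r.
Proof. by rewrite /= cats0. Qed.

Lemma lca2 (i j : V) l r : lca_size i j (Node [:: l; r]) =
  if (i \in leaves l) && (j \in leaves l) then lca_size i j l
  else if (i \in leaves r) && (j \in leaves r) then lca_size i j r
  else size (leaves l ++ leaves r).
Proof. by rewrite lcaE /= cats0; case: ifP => //; case: ifP. Qed.

Lemma lemmaA (i j : V) t : is_binary t -> i != j -> i \in leaves t -> j \in leaves t ->
  exists l r, [/\ subt (Node [:: l; r]) t,
    lca_size i j t = size (leaves l ++ leaves r) &
    (i \in leaves l /\ j \in leaves r) \/ (i \in leaves r /\ j \in leaves l)].
Proof.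
elim/bin_ind: t => [x|l r IHl IHr|ts /bin_other -> //].
  move=> _ ij; rewrite /= !inE => /eqP ie /eqP je; by rewrite ie je eqxx in ij.
rewrite binE => /andP[bl br] ij; rewrite leaves2 !mem_cat => iin jin.
rewrite lca2; case: ifP => [/andP[il jl]|Hl].
  have [l' [r' [s1 s2 s3]]] := IHl bl ij il jl.
  exists l', r'; split => //; apply: subt_trans s1 (subt_child _); by left.
case: ifP => [/andP[ir jr]|Hr].
  have [l' [r' [s1 s2 s3]]] := IHr br ij ir jr.
  exists l', r'; split => //; apply: subt_trans s1 (subt_child _); by right; left.
exists l, r; split => //; first exact: subt_refl.
move: Hl Hr iin jin; case: (i \in leaves l); case: (j \in leaves l);
  case: (i \in leaves r); case: (j \in leaves r) => //=; auto.
Qed.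

Lemma bin_pos t : is_binary t -> (0 < size (leaves t))%N.
Proof.
elim/bin_ind: t => [x|l r IHl IHr|ts /bin_other -> //] //.
by rewrite binE leaves2 size_cat => /andP[/IHl ? _]; rewrite addn_gt0 (_ : 0 < _)%N.
Qed.

Definition near (T : tree V) (i j : V) (b : nat) :=
  exists s, [/\ subt s T, i \in leaves s, j \in leaves s & (size (leaves s) <= b)%N].

Lemma near_sub (T1 T2 : tree V) i j b : near T1 i j b -> subt T1 T2 -> near T2 i j b.
Proof. case=> s [s1 s2 s3 s4] h; exists s; split => //; exact: subt_trans h. Qed.

Lemma near_mono T i j b b' : near T i j b -> (b <= b')%N -> near T i j b'.
Proof. case=> s [s1 s2 s3 s4] h; exists s; split => //; exact: leq_trans h. Qed.

Lemma near_root T i j : i \in leaves T -> j \in leaves T -> near T i j (size (leaves T)).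
Proof. by move=> ??; exists T; split => //; exact: subt_refl. Qed.

Variable K : nat.

Fixpoint go (t : tree V) (acc : seq V) {struct t} : tree V :=
  if (size (leaves t) <= K)%N then flat (acc ++ leaves t) else
  match t with
  | Node [:: l; r] =>
     if (K < size (leaves l))%N && (K < size (leaves r))%N then
        if acc is [::] then Node [:: go l [::]; go r [::]]
        else Node [:: flat acc; Node [:: go l [::]; go r [::]]]
     else if (size (leaves l) <= K)%N then
        if (size (acc ++ leaves l) < K)%N then go r (acc ++ leaves l)
        else Node [:: flat (acc ++ leaves l); go r [::]]
     else
        if (size (acc ++ leaves r) < K)%N then go l (acc ++ leaves r)
        else Node [:: flat (acc ++ leaves r); go l [::]]
  | _ => flat (acc ++ leaves t)
  end.

Lemma go_small t acc : (size (leaves t) <= K)%N -> go t acc = flat (acc ++ leaves t).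
Proof. by case: t => [x|ts] /= ->. Qed.

Lemma go2 l r acc : (K < size (leaves (Node [:: l; r])))%N ->
  go (Node [:: l; r]) acc =
     if (K < size (leaves l))%N && (K < size (leaves r))%N then
        if acc is [::] then Node [:: go l [::]; go r [::]]
        else Node [:: flat acc; Node [:: go l [::]; go r [::]]]
     else if (size (leaves l) <= K)%N then
        if (size (acc ++ leaves l) < K)%N then go r (acc ++ leaves l)
        else Node [:: flat (acc ++ leaves l); go r [::]]
     else
        if (size (acc ++ leaves r) < K)%N then go l (acc ++ leaves r)
        else Node [:: flat (acc ++ leaves r); go l [::]].
Proof. by rewrite ltnNge => /negbTE H; rewrite [LHS]/= H. Qed.

Lemma go_other ts acc : size ts != 2 -> go (Node ts) acc = flat (acc ++ leaves (Node ts)).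
Proof. by case: ts => [|a [|b [|c d]]] //= _; case: ifP. Qed.

Lemma go_perm t acc : perm_eq (leaves (go t acc)) (acc ++ leaves t).
Proof.
elim/bin_ind: t acc => [x|l r IHl IHr|ts H] acc.
- by rewrite /=; case: ifP; rewrite leaves_flat.
- case: (leqP (size (leaves (Node [:: l; r]))) K) => [/go_small ->|H].
    by rewrite leaves_flat.
  rewrite go2 // leaves2.
  case: ifP => _.
    case: acc => [|a acc]; rewrite leaves2.
      exact: (perm_cat (IHl [::]) (IHr [::])).
    rewrite leaves_flat leaves2 perm_cat2l; exact: (perm_cat (IHl [::]) (IHr [::])).
  case: ifP => _.
    case: ifP => _; first by rewrite catA.
    by rewrite leaves2 leaves_flat -catA !perm_cat2l; exact: (IHr [::]).
  case: ifP => _.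
    apply: perm_trans (IHl _) _; rewrite -!catA perm_cat2l perm_catC //.
  rewrite leaves2 leaves_flat -!catA perm_cat2l.
  rewrite perm_catC; exact: (perm_cat (IHl [::]) (perm_refl _)).
- by rewrite go_other // leaves_flat.
Qed.

Lemma ni2 (a b : tree V) : num_internal (Node [:: a; b]) = (num_internal a + num_internal b).+1.
Proof. by rewrite num_internalE /= addn0. Qed.

Lemma all_nodes2 P (a b : tree V) : all_nodes P (Node [:: a; b]) = [&& P [:: a; b], all_nodes P a & all_nodes P b].
Proof. by rewrite all_nodesE /= andbT. Qed.

Definition FO := fun ts : seq (tree V) => (0 < size ts <= K.*2)%N.

Lemma FO_flat (s : seq V) : (0 < size s <= K.*2)%N -> all_nodes FO (flat s).
Proof. by rewrite all_nodes_flat /FO size_map. Qed.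

Lemma go_count t acc : is_binary t -> (size acc < K)%N -> (0 < K)%N ->
  [/\ all_nodes FO (go t acc),
      (size acc + size (leaves t) <= K.*2 * num_internal (go t acc))%N &
      ((K < size (leaves t))%N -> (K * (num_internal (go t acc) + 3) <= 6 * (size acc + size (leaves t)))%N)].
Proof.
elim/bin_ind: t acc => [x|l r IHl IHr|ts /bin_other -> //] acc bt sa K0.
- rewrite go_small // ni_flat /=.
  split; [apply: FO_flat; rewrite size_cat /=; apply/andP; split; lia | rewrite /=; lia | move=> /= ?; lia].
move: bt; rewrite binE => /andP[bl br].
have pl := bin_pos bl; have pr := bin_pos br.
move: (leaves2 l r) => L2.
case: (leqP (size (leaves (Node [:: l; r]))) K) => Hs.
  rewrite go_small // FO_flat ?ni_flat; rewrite L2 !size_cat in Hs *; last first.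
    apply/andP; split; lia.
  split => //; lia.
rewrite go2 //; rewrite L2 size_cat in Hs *.
have [Fl Sl Cl] := IHl [::] bl K0 K0.
have [Fr Sr Cr] := IHr [::] br K0 K0.
rewrite /= in Sl Sr Cl Cr.
case: ifP => [/andP[bgl bgr]|nb].
  move: (Cl bgl) (Cr bgr) => {}Cl {}Cr.
  case: acc sa => [|a acc] sa.
    rewrite ni2 all_nodes2 Fl Fr /FO /= andbT.
    split => //; first by case: K K0.
      rewrite /= in sa *; lia.
    move=> _ /=; lia.
  rewrite !ni2 !all_nodes2 Fl Fr ni_flat FO_flat /FO /=; last first.
    by move: sa; rewrite /=; lia.
  split; [apply/and3P; split; lia| rewrite /= in sa *; lia | move=> _; rewrite /= in sa *; lia].
case: ifP => [lsm|lbg].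
  case: ifP => [cont|emit].
    have [Fr' Sr' Cr'] := IHr (acc ++ leaves l) br cont K0.
    rewrite size_cat in Sr' Cr' cont.
    split => //; first lia.
    move=> _; case: (leqP (size (leaves r)) K) => rs.
      rewrite go_small // ni_flat; lia.
    move: (Cr' rs); lia.
  rewrite size_cat in emit.
  rewrite ni2 ni_flat all_nodes2 Fr FO_flat /FO /=; last by rewrite size_cat; apply/andP; split; lia.
  split; first by case: K K0.
    lia.
  move=> _; case: (leqP (size (leaves r)) K) => rs.
    rewrite go_small // ni_flat; lia.
  move: (Cr rs); lia.
have rsm : (size (leaves r) <= K)%N.
  by move/negbT: nb; move/negbT: lbg; lia.
move: lbg => /negbT; rewrite -ltnNge => lbg.
case: ifP => [cont|emit].
  have [Fl' Sl' Cl'] := IHl (acc ++ leaves r) bl cont K0.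
  rewrite size_cat in Sl' Cl' cont.
  split => //; first lia.
  move=> _; move: (Cl' lbg); lia.
rewrite size_cat in emit.
rewrite ni2 ni_flat all_nodes2 Fl FO_flat /FO /=; last by rewrite size_cat; apply/andP; split; lia.
split; first by case: K K0.
  lia.
move=> _; move: (Cl lbg); lia.
Qed.

Lemma mem_go t acc x : (x \in leaves (go t acc)) = (x \in acc ++ leaves t).
Proof. exact: (perm_mem (go_perm t acc)). Qed.

Lemma size_go t acc : size (leaves (go t acc)) = (size acc + size (leaves t))%N.
Proof. by rewrite (perm_size (go_perm t acc)) size_cat. Qed.

Lemma subt_inv2 u l r : subt u (Node [:: l; r]) -> u = Node [:: l; r] \/ subt u l \/ subt u r.
Proof.
move=> H; inversion H; first by left.
right; case: H1 => [E|[E|//]]; subst; [left|right] => //.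
Qed.

Lemma subt_leaf u x : subt u (Leaf x) -> u = Leaf x.
Proof. by move=> H; inversion H. Qed.

Lemma near_flat (s : seq V) T i j : subt (flat s) T -> i \in s -> j \in s -> near T i j (size s).
Proof. move=> H iS jS; apply: near_sub H; have := @near_root (flat s) i j; rewrite leaves_flat; exact. Qed.

Lemma go_near t acc : is_binary t -> (size acc < K)%N ->
  (forall i j, i \in acc -> j \in acc -> near (go t acc) i j K.*2) /\
  (forall l r i j, subt (Node [:: l; r]) t -> i \in leaves l -> j \in leaves r ->
       near (go t acc) i j (size (leaves l) + size (leaves r) + K.*2)).
Proof.
elim/bin_ind: t acc => [x|l0 r0 IHl IHr|ts /bin_other -> //] acc bt sa.
- rewrite go_small /=; last by lia.
  split.
    move=> i j ia ja; apply: near_mono (near_flat _ _ _) _; first exact: subt_refl.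
    + by rewrite mem_cat ia.
    + by rewrite mem_cat ja.
    rewrite size_cat /=; lia.
  by move=> l r i j /subt_leaf.
move: bt; rewrite binE => /andP[bl br].
move: (leaves2 l0 r0) => L2.
have ml : forall l r x, subt (Node [:: l; r]) l0 -> x \in leaves l -> x \in leaves l0.
  move=> l r x H xl; apply: subt_mem H _; by rewrite leaves2 mem_cat xl.
have mr : forall l r x, subt (Node [:: l; r]) r0 -> x \in leaves l -> x \in leaves r0.
  move=> l r x H xl; apply: subt_mem H _; by rewrite leaves2 mem_cat xl.
have ml' : forall l r x, subt (Node [:: l; r]) l0 -> x \in leaves r -> x \in leaves l0.
  move=> l r x H xl; apply: subt_mem H _; by rewrite leaves2 mem_cat xl orbT.
have mr' : forall l r x, subt (Node [:: l; r]) r0 -> x \in leaves r -> x \in leaves r0.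
  move=> l r x H xl; apply: subt_mem H _; by rewrite leaves2 mem_cat xl orbT.
case: (leqP (size (leaves (Node [:: l0; r0]))) K) => Hs.
  rewrite go_small //; split.
    move=> i j ia ja; apply: near_mono (near_flat _ _ _) _; first exact: subt_refl.
    + by rewrite mem_cat ia.
    + by rewrite mem_cat ja.
    rewrite size_cat; lia.
  move=> l r i j H il jr; apply: near_mono (near_flat _ _ _) _; first exact: subt_refl.
  + rewrite mem_cat; apply/orP; right; apply: subt_mem H _; by rewrite leaves2 mem_cat il.
  + rewrite mem_cat; apply/orP; right; apply: subt_mem H _; by rewrite leaves2 mem_cat jr orbT.
  rewrite size_cat; lia.
rewrite go2 //; rewrite L2 size_cat in Hs.
have [Bl Dl] := IHl [::] bl (leq_ltn_trans (leq0n _) sa).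
have [Br Dr] := IHr [::] br (leq_ltn_trans (leq0n _) sa).
case: ifP => [/andP[bgl bgr]|nb].
  set B := Node [:: go l0 [::]; go r0 [::]].
  have sB : subt B (if acc is [::] then B else Node [:: flat acc; B]).
    case: acc {sa} => [|a acc]; first exact: subt_refl.
    by apply: subt_child; right; left.
  split.
    case: acc sa sB => [//|a acc] sa sB i j ia ja.
    apply: near_mono (near_flat _ ia ja) _; first by apply: subt_child; left.
    lia.
  move=> l r i j /subt_inv2 [[El Er]|[H|H]] il jr.
  - subst l r; apply: near_sub sB; apply: near_mono (near_root _ _) _.
    + by rewrite /B leaves2 mem_cat !mem_go !cat0s il.
    + by rewrite /B leaves2 mem_cat !mem_go !cat0s jr orbT.
    by rewrite /B leaves2 size_cat !size_go !add0n leq_addr.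
  - apply: near_sub sB; apply: near_sub (Dl _ _ _ _ H il jr) _.
    by apply: subt_child; left.
  - apply: near_sub sB; apply: near_sub (Dr _ _ _ _ H il jr) _.
    by apply: subt_child; right; left.
case: ifP => [lsm|lbg].
  case: ifP => [cont|emit].
    have [Bc Dc] := IHr (acc ++ leaves l0) br cont.
    rewrite size_cat in cont.
    split; first by move=> i j ia ja; apply: Bc; rewrite mem_cat ?ia ?ja.
    move=> l r i j /subt_inv2 [[El Er]|[H|H]] il jr.
    - subst l r; apply: near_mono (near_root _ _) _.
      + by rewrite mem_go !mem_cat il orbT.
      + by rewrite mem_go !mem_cat jr !orbT.
      rewrite size_go size_cat; lia.
    - apply: near_mono (Bc _ _ _ _) _; last lia.
      + by rewrite mem_cat (ml _ _ _ H il) orbT.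
      + by rewrite mem_cat (ml' _ _ _ H jr) orbT.
    - exact: Dc.
  rewrite size_cat in emit.
  split.
    move=> i j ia ja; apply: near_mono (near_flat _ _ _) _.
    + by apply: subt_child; left.
    + by rewrite mem_cat ia.
    + by rewrite mem_cat ja.
    rewrite size_cat; lia.
  move=> l r i j /subt_inv2 [[El Er]|[H|H]] il jr.
  - subst l r; apply: near_mono (near_root _ _) _.
    + by rewrite leaves2 mem_cat leaves_flat !mem_cat il orbT.
    + by rewrite leaves2 mem_cat mem_go jr orbT.
    rewrite leaves2 size_cat leaves_flat size_go !size_cat /=; lia.
  - apply: near_mono (near_flat _ _ _) _.
    + by apply: subt_child; left.
    + by rewrite mem_cat (ml _ _ _ H il) orbT.
    + by rewrite mem_cat (ml' _ _ _ H jr) orbT.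
    rewrite size_cat; lia.
  - apply: near_sub (Dr _ _ _ _ H il jr) _.
    by apply: subt_child; right; left.
have rsm : (size (leaves r0) <= K)%N.
  by move/negbT: nb; move/negbT: lbg; lia.
case: ifP => [cont|emit].
  have [Bc Dc] := IHl (acc ++ leaves r0) bl cont.
  rewrite size_cat in cont.
  split; first by move=> i j ia ja; apply: Bc; rewrite mem_cat ?ia ?ja.
  move=> l r i j /subt_inv2 [[El Er]|[H|H]] il jr.
  - subst l r; apply: near_mono (near_root _ _) _.
    + by rewrite mem_go !mem_cat il !orbT.
    + by rewrite mem_go !mem_cat jr !orbT.
    rewrite size_go size_cat; lia.
  - exact: Dc.
  - apply: near_mono (Bc _ _ _ _) _; last lia.
    + by rewrite mem_cat (mr _ _ _ H il) orbT.
    + by rewrite mem_cat (mr' _ _ _ H jr) orbT.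
rewrite size_cat in emit.
split.
  move=> i j ia ja; apply: near_mono (near_flat _ _ _) _.
  + by apply: subt_child; left.
  + by rewrite mem_cat ia.
  + by rewrite mem_cat ja.
  rewrite size_cat; lia.
move=> l r i j /subt_inv2 [[El Er]|[H|H]] il jr.
- subst l r; apply: near_mono (near_root _ _) _.
  + by rewrite leaves2 mem_cat mem_go il !orbT.
  + by rewrite leaves2 mem_cat leaves_flat !mem_cat jr !orbT.
  rewrite leaves2 size_cat leaves_flat size_go !size_cat /=; lia.
- apply: near_sub (Dl _ _ _ _ H il jr) _.
  by apply: subt_child; right; left.
- apply: near_mono (near_flat _ _ _) _.
  + by apply: subt_child; left.
  + by rewrite mem_cat (mr _ _ _ H il) orbT.
  + by rewrite mem_cat (mr' _ _ _ H jr) orbT.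
  rewrite size_cat; lia.
Qed.

Lemma go_lca TO i j : is_hc_tree TO -> is_binary TO -> (0 < K)%N -> i != j ->
  (lca_size i j (go TO [::]) <= lca_size i j TO + K.*2)%N.
Proof.
move=> /andP[pT _] bT K0 ij.
have iT : i \in leaves TO by rewrite (perm_mem pT) mem_enum.
have jT : j \in leaves TO by rewrite (perm_mem pT) mem_enum.
have uT : uniq (leaves (go TO [::])).
  by rewrite (perm_uniq (go_perm _ _)) /= (perm_uniq pT) enum_uniq.
have [l [r [s1 s2 s3]]] := lemmaA bT ij iT jT.
have [_ D] := @go_near TO [::] bT K0.
rewrite s2 size_cat.
case: s3 => [[il jr]|[ir jl]].
  have [s [t1 t2 t3 t4]] := D _ _ _ _ s1 il jr.
  exact: leq_trans (lemmaB uT t1 t2 t3) t4.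
have [s [t1 t2 t3 t4]] := D _ _ _ _ s1 jl ir.
apply: leq_trans (lemmaB uT t1 t3 t2) _; move: t4; lia.
Qed.

End Gen.

Section Lower.
Variable n : nat.
Notation V := 'I_n.

Definition two (p : pred V) : tree V :=
  Node [:: flat (filter p (enum V)); flat (filter (predC p) (enum V))].

Lemma two_hc p : (0 < count p (enum V))%N -> (0 < count (predC p) (enum V))%N ->
  is_hc_tree (two p).
Proof.
move=> c1 c2; apply/andP; split.
  by rewrite leaves2 !leaves_flat perm_filterC.
rewrite all_nodes2 !all_nodes_flat /= !size_map !size_filter.
by rewrite -!lt0n c1 c2.
Qed.

Lemma two_rev p (i j : V) : p i = p j ->
  (count (fun x => p x != p i) (enum V) <= n - lca_size i j (two p))%N.
Proof.
move=> e.
have pf : perm_eq (filter p (enum V) ++ filter (predC p) (enum V)) (enum V) by rewrite perm_filterC.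
have u : uniq (leaves (two p)) by rewrite leaves2 !leaves_flat (perm_uniq pf) enum_uniq.
have cc := count_predC p (enum V); rewrite size_enum_ord in cc.
case: (boolP (p i)) => pi.
  have pj : p j by rewrite -e.
  have -> : count (fun x => p x != true) (enum V) = count (predC p) (enum V).
    by apply: eq_count => x /=; case: (p x).
  have Hi : i \in leaves (flat (filter p (enum V))) by rewrite leaves_flat mem_filter pi mem_enum.
  have Hj : j \in leaves (flat (filter p (enum V))) by rewrite leaves_flat mem_filter pj mem_enum.
  have sc : subt (flat (filter p (enum V))) (two p) by apply: subt_child; left.
  have := @lemmaB n i j (two p) _ u sc Hi Hj.
  rewrite leaves_flat size_filter; lia.
have pj : ~~ p j by rewrite -e.
have -> : count (fun x => p x != false) (enum V) = count p (enum V).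
  by apply: eq_count => x /=; case: (p x).
have Hi : i \in leaves (flat (filter (predC p) (enum V))) by rewrite leaves_flat mem_filter /= pi mem_enum.
have Hj : j \in leaves (flat (filter (predC p) (enum V))) by rewrite leaves_flat mem_filter /= pj mem_enum.
have sc : subt (flat (filter (predC p) (enum V))) (two p) by apply: subt_child; right; left.
have := @lemmaB n i j (two p) _ u sc Hi Hj.
rewrite leaves_flat size_filter; lia.
Qed.

Variable q : nat.
Hypothesis q0 : (0 < q)%N.
Hypothesis qn : (4 * q <= n)%N.

Definition cls (x : V) := minn (x %/ q) 3.

Lemma cls_count a : (a <= 3)%N -> (q <= count (fun x => cls x == a) (enum V))%N.
Proof.
move=> a3.
have -> : count (fun x => cls x == a) (enum V) =
   count (fun m => minn (m %/ q) 3 == a) (iota 0 n).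
  by rewrite -val_enum_ord count_map.
have aq : (a * q <= 3 * q)%N by rewrite leq_mul2r a3 orbT.
have E : n = (a * q + (q + (n - a * q - q)))%N by lia.
rewrite [X in iota 0 X]E !iotaD !count_cat.
suff -> : count (fun m => minn (m %/ q) 3 == a) (iota (0 + a * q) q) = q by lia.
suff : all (fun m => minn (m %/ q) 3 == a) (iota (0 + a * q) q).
  by rewrite all_count size_iota => /eqP.
apply/allP => m.
rewrite mem_iota add0n => /andP[m1 m2].
have -> : m = (a * q + (m - a * q))%N by lia.
rewrite divnMDl // divn_small ?addn0; last lia.
apply/eqP; lia.
Qed.

Lemma side_count (P : pred nat) a b : (a <= 3)%N -> (b <= 3)%N -> a != b -> P a -> P b ->
  (q.*2 <= count (fun x => P (cls x)) (enum V))%N.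
Proof.
move=> a3 b3 ab Pa Pb.
have := count_predUI (fun x => cls x == a) (fun x => cls x == b) (enum V).
have -> : count (predI (fun x => cls x == a) (fun x => cls x == b)) (enum V) = 0%N.
  apply/eqP; rewrite -leqn0 leqNgt -has_count; apply/hasP => -[x _] /= /andP[/eqP -> /eqP E].
  by rewrite E eqxx in ab.
have : (count (predU (fun x => cls x == a) (fun x => cls x == b)) (enum V) <=
        count (fun x => P (cls x)) (enum V))%N.
  by apply: sub_count => x /= /orP[] /eqP ->.
have := cls_count a3; have := cls_count b3; lia.
Qed.

End Lower.

Section Lower2.
Variable n : nat.
Notation V := 'I_n.
Variable q : nat.
Hypothesis q0 : (0 < q)%N.
Hypothesis qn : (4 * q <= n)%N.

Definition P0 (m : nat) := (2 <= m)%N.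
Definition P1 (m : nat) := odd m.
Definition P2 (m : nat) := (m == 1)%N || (m == 2)%N.

Lemma cls_le3 (x : V) : (cls q x <= 3)%N.
Proof. by rewrite /cls geq_minr. Qed.

Lemma agree a b : (a <= 3)%N -> (b <= 3)%N ->
  [|| P0 a == P0 b, P1 a == P1 b | P2 a == P2 b].
Proof. by case: a => [|[|[|[|a]]]] //; case: b => [|[|[|[|b]]]]. Qed.

Lemma side_ok (P : pred nat) (v : bool) :
  (exists a b, [/\ (a <= 3)%N, (b <= 3)%N, a != b, P a != v & P b != v]) ->
  (q.*2 <= count (fun x : V => P (cls q x) != v) (enum V))%N.
Proof.
case=> a [b [a3 b3 ab Pa Pb]].
exact: (@side_count n q q0 qn (fun m => P m != v) a b a3 b3 ab Pa Pb).
Qed.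

Lemma pk_bound (P : pred nat) (i j : V) :
  (forall v, exists a b, [/\ (a <= 3)%N, (b <= 3)%N, a != b, P a != v & P b != v]) ->
  P (cls q i) = P (cls q j) ->
  (q.*2 <= n - lca_size i j (two (fun x : V => P (cls q x))))%N.
Proof.
move=> H e.
have := @two_rev n (fun x : V => P (cls q x)) i j e.
have := side_ok (H (P (cls q i))); lia.
Qed.

Lemma P0ok v : exists a b, [/\ (a <= 3)%N, (b <= 3)%N, a != b, P0 a != v & P0 b != v].
Proof. by case: v; [exists 0%N, 1%N | exists 2%N, 3%N]. Qed.
Lemma P1ok v : exists a b, [/\ (a <= 3)%N, (b <= 3)%N, a != b, P1 a != v & P1 b != v].
Proof. by case: v; [exists 0%N, 2%N | exists 1%N, 3%N]. Qed.
Lemma P2ok v : exists a b, [/\ (a <= 3)%N, (b <= 3)%N, a != b, P2 a != v & P2 b != v].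
Proof. by case: v; [exists 0%N, 3%N | exists 1%N, 2%N]. Qed.

Lemma pair_bound (i j : V) :
  (q.*2 <= (n - lca_size i j (two (fun x : V => P0 (cls q x)))) +
           (n - lca_size i j (two (fun x : V => P1 (cls q x)))) +
           (n - lca_size i j (two (fun x : V => P2 (cls q x)))))%N.
Proof.
case/or3P: (agree (cls_le3 i) (cls_le3 j)) => /eqP e.
- have := pk_bound P0ok e; lia.
- have := pk_bound P1ok e; lia.
- have := pk_bound P2ok e; lia.
Qed.

Lemma two_hc_k (P : pred nat) :
  (forall v, exists a b, [/\ (a <= 3)%N, (b <= 3)%N, a != b, P a != v & P b != v]) ->
  is_hc_tree (two (fun x : V => P (cls q x))).
Proof.
move=> H; apply: two_hc.
- have := side_ok (H false).
  have -> : count (fun x : V => P (cls q x) != false) (enum V) = count (fun x : V => P (cls q x)) (enum V).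
    by apply: eq_count => x; case: (P _).
  by move=> h; apply: leq_trans h; rewrite -addnn addn_gt0 q0.
- have := side_ok (H true).
  have -> : count (fun x : V => P (cls q x) != true) (enum V) = count (predC (fun x : V => P (cls q x))) (enum V).
    by apply: eq_count => x /=; case: (P _).
  by move=> h; apply: leq_trans h; rewrite -addnn addn_gt0 q0.
Qed.

End Lower2.

Unset Implicit Arguments. Set Strict Implicit.
Local Open Scope ring_scope.

Lemma exK (R : realFieldType) (x : R) m : 1 <= x -> x <= m%:R ->
  exists K : nat, [/\ (0 < K <= m)%N, K%:R <= x & x < K.+1%:R].
Proof.
move=> x1; elim: m => [|m IH] xm.
  by move: xm; rewrite (_ : 0%:R = 0 :> R) // => xm; lra.
case: (lerP (m.+1)%:R x) => h1.
  exists m.+1; split; [by rewrite leqnn | by [] | apply: le_lt_trans xm _; by rewrite ltr_nat].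
case: (lerP m%:R x) => h2.
  exists m; split => //.
  case: m {IH xm} h1 h2 => [|m] h1 h2.
    by have := lt_le_trans h1 x1; rewrite ltxx.
  by rewrite ltnS leqnSn.
have [K [K1 K2 K3]] := IH (ltW h2).
exists K; split => //; lia.
Qed.

Lemma rev_ge0 (R : realFieldType) n (w : 'I_n -> 'I_n -> R) T :
  (forall i j, 0 <= w i j <= 1) -> 0 <= hc_rev w T.
Proof.
move=> w01; apply: sumr_ge0 => i _; apply: sumr_ge0 => j _.
by apply: mulr_ge0; [case/andP: (w01 i j) | exact: ler0n].
Qed.

Lemma sumD3 (R : realFieldType) (I : Type) (r : seq I) (P : pred I) (F G H : I -> R) :
  \sum_(i <- r | P i) (F i + G i + H i) =
  \sum_(i <- r | P i) F i + \sum_(i <- r | P i) G i + \sum_(i <- r | P i) H i.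
Proof. by rewrite !big_split. Qed.

Lemma natsub a b c d : (a <= b + d)%N -> (c - b <= c - a + d)%N.
Proof. lia. Qed.

Lemma qfacts n : (20 <= n)%N -> [/\ (0 < n %/ 4)%N, (4 * (n %/ 4) <= n)%N & (3 * n <= 19 * (n %/ 4))%N].
Proof. move=> h; split; lia. Qed.

Theorem theorem1 :
  exists c1 c2 : rat, 0 < c1 /\ 0 < c2 /\
  forall (R : realFieldType) (n : nat) (w : 'I_n -> 'I_n -> R) (TO : tree 'I_n)
         (eps : R),
    (2 <= n)%N ->
    (forall i j, 0 <= w i j <= 1) ->
    is_hc_tree TO -> is_binary TO ->
    (forall T : tree 'I_n, is_hc_tree T -> hc_rev w T <= hc_rev w TO) ->
    0 < eps -> eps <= 1 -> 1 <= eps * n%:R ->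
    exists Tt : tree 'I_n,
      [/\ is_hc_tree Tt,
          ratr c1 / eps <= (num_internal Tt)%:R <= ratr c2 / eps,
          all_nodes (fun ts => (size ts)%:R <= 3 * eps * n%:R) Tt
        & (1 - 19 * eps) * hc_rev w TO <= hc_rev w Tt].
Proof.
exists 3^-1, 12; split; first by rewrite invr_gt0. split; first by [].
move=> R n w TO eps n2 w01 hcT binT opt e0 e1 en.
have nR : eps * n%:R <= n%:R by rewrite -{2}(mul1r n%:R) ler_wpM2r ?ler0n.
have [K [/andP[K0 Kn] Kx xK]] := @exK R _ n en nR.
have [pT aT] := andP hcT.
have sT : size (leaves TO) = n by rewrite (perm_size pT) size_enum_ord.
set Tt := go K TO [::].
have [FO' S' C'] := @go_count n K TO [::] binT K0 K0.
rewrite /= sT add0n in S' C'.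
have NK : (num_internal Tt * K <= 6 * n)%N.
  case: (ltnP K n) => h; first by have := C' h; rewrite /Tt; nia.
  have E : Tt = flat (leaves TO).
    by rewrite /Tt go_small; try reflexivity; rewrite sT.
  by rewrite E ni_flat; lia.
have hcTt : is_hc_tree Tt.
  apply/andP; split; first by apply: perm_trans pT; exact: (go_perm K TO [::]).
  by apply: all_nodes_mono FO' => ts /andP[h _]; rewrite -lt0n.
exists Tt; split => //.
- have NR : (num_internal Tt)%:R * K%:R <= 6 * n%:R :> R.
    by rewrite -!natrM ler_nat.
  have SR : n%:R <= 2 * K%:R * (num_internal Tt)%:R :> R.
    by rewrite -!natrM ler_nat mul2n.
  have N0 : 0 <= (num_internal Tt)%:R :> R by exact: ler0n.
  have n0 : 2 <= n%:R :> R by rewrite ler_nat.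
  have r3 : ratr (3^-1 : rat) = 3^-1 :> R by rewrite fmorphV rmorph_nat.
  have r12 : ratr (12 : rat) = 12 :> R by rewrite rmorph_nat.
  have n0' : 0 < n%:R :> R by apply: lt_le_trans n0; rewrite ltr0n.
  rewrite r3 r12.
  apply/andP; split.
    rewrite ler_pdivrMr //.
    have h1 : n%:R <= 2 * (eps * n%:R) * (num_internal Tt)%:R.
      apply: le_trans SR _; rewrite -!mulrA ler_pM2l // mulrA; exact: ler_wpM2r.
    have e : 2 * (eps * n%:R) * (num_internal Tt)%:R = n%:R * (2 * ((num_internal Tt)%:R * eps)) by ring.
    rewrite e -{1}(mulr1 n%:R) ler_pM2l // in h1.
    move: h1; set y := _ * eps; move=> h1.
    lra.
  rewrite ler_pdivlMr //.
  have h1 : (num_internal Tt)%:R * (eps * n%:R) <= (num_internal Tt)%:R * (2 * K%:R).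
    apply: ler_wpM2l => //; apply: le_trans (ltW xK) _.
    have hk : (K.+1 <= 2 * K)%N by rewrite mul2n -addnn -{1}add1n leq_add2r.
    by rewrite -natrM ler_nat.
  have e : (num_internal Tt)%:R * (2 * K%:R) = 2 * ((num_internal Tt)%:R * K%:R) :> R by ring.
  rewrite e in h1.
  have h2 : n%:R * ((num_internal Tt)%:R * eps) <= n%:R * 12.
    have e2 : n%:R * ((num_internal Tt)%:R * eps) = (num_internal Tt)%:R * (eps * n%:R) by ring.
    have e3 : n%:R * 12 = 2 * (6 * n%:R) :> R by ring.
    rewrite e2 e3; apply: le_trans h1 _; by rewrite ler_pM2l.
  by rewrite ler_pM2l in h2.
- apply: all_nodes_mono FO' => ts /andP[_ h].
  apply: le_trans (_ : (K.*2)%:R <= _).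
    by rewrite ler_nat.
  rewrite -mul2n natrM.
  have h0 : 0 <= eps * n%:R by apply: mulr_ge0; [exact: ltW | exact: ler0n].
  apply: le_trans (_ : 2 * (eps * n%:R) <= _).
    by rewrite ler_pM2l.
  rewrite -mulrA ler_wpM2r //.
  by rewrite ler_nat.
set W := \sum_(i < n) \sum_(j < n | (i < j)%N) w i j.
have W0 : 0 <= W.
  by apply: sumr_ge0 => i _; apply: sumr_ge0 => j _; case/andP: (w01 i j).
have hA : hc_rev w TO - (K.*2)%:R * W <= hc_rev w Tt.
  rewrite /hc_rev /W mulr_sumr -sumrB; apply: ler_sum => i _.
  rewrite mulr_sumr -sumrB; apply: ler_sum => j ij.
  have ijn : i != j by apply/eqP => E; rewrite E ltnn in ij.
  have hl := @go_lca n K TO i j hcT binT K0 ijn.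
  have -> : (K.*2)%:R * w i j = w i j * (K.*2)%:R by rewrite mulrC.
  rewrite -mulrBr; apply: ler_wpM2l; first by case/andP: (w01 i j).
  by rewrite lerBlDr -natrD ler_nat natsub.
case: (lerP 1 (19 * eps)) => h19.
  have r0 := @rev_ge0 R n w Tt w01.
  have r1 := @rev_ge0 R n w TO w01.
  apply: (le_trans _ r0).
  by apply: mulr_le0_ge0 => //; rewrite subr_le0.
have n20 : (20 <= n)%N.
  have n0' : 0 < n%:R :> R by rewrite ltr0n; apply: leq_trans n2.
  have h3 : 19 * (eps * n%:R) < 1 * n%:R by rewrite mulrA (ltr_pM2r n0').
  have h4 : 19 <= 19 * (eps * n%:R) :> R by rewrite -{1}(mulr1 19) ler_pM2l.
  have := le_lt_trans h4 h3; rewrite mul1r ltr_nat; by [].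
have [q0 qn q19] := @qfacts n n20.
set q := (n %/ 4)%N in q0 qn q19.
set T0 := two (fun x : 'I_n => P0 (cls q x)).
set T1 := two (fun x : 'I_n => P1 (cls q x)).
set T2 := two (fun x : 'I_n => P2 (cls q x)).
have o0 := opt T0 (two_hc_k q0 qn (@P0ok)).
have o1 := opt T1 (two_hc_k q0 qn (@P1ok)).
have o2 := opt T2 (two_hc_k q0 qn (@P2ok)).
have hB : (q.*2)%:R * W <= hc_rev w T0 + hc_rev w T1 + hc_rev w T2.
  rewrite /hc_rev /W mulr_sumr -sumD3; apply: ler_sum => i _.
  rewrite mulr_sumr -sumD3; apply: ler_sum => j _.
  rewrite -!mulrDr mulrC; apply: ler_wpM2l; first by case/andP: (w01 i j).
  rewrite -!natrD ler_nat; exact: pair_bound.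
set X := hc_rev w TO.
have hC : hc_rev w T0 + hc_rev w T1 + hc_rev w T2 <= 3 * X.
  apply: le_trans (lerD (lerD o0 o1) o2) _.
  by rewrite (_ : 3 * X = X + X + X) //; ring.
have hK : (K.*2)%:R * W <= 2 * (eps * n%:R * W).
  rewrite -mul2n natrM -mulrA ler_pM2l // ler_wpM2r //.
have hN : 3 * (eps * n%:R * W) <= 19 * (eps * (q%:R * W)).
  have h : (3 * n)%:R * (eps * W) <= (19 * q)%:R * (eps * W).
    by apply: ler_wpM2r; [apply: mulr_ge0 => //; exact: ltW | rewrite ler_nat].
  rewrite !natrM in h.
  have e1' : 3 * (eps * n%:R * W) = 3%:R * n%:R * (eps * W) by ring.
  have e2' : 19 * (eps * (q%:R * W)) = 19%:R * q%:R * (eps * W) by ring.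
  by rewrite e1' e2'.
have hQ : eps * ((q.*2)%:R * W) <= eps * (3 * X).
  by apply: ler_wpM2l; [exact: ltW | exact: le_trans hB hC].
have e3 : eps * ((q.*2)%:R * W) = 2 * (eps * (q%:R * W)) by rewrite -mul2n natrM; ring.
have e4 : eps * (3 * X) = 3 * (eps * X) by ring.
rewrite e3 e4 in hQ.
have e5 : (1 - 19 * eps) * X = X - 19 * (eps * X) by ring.
rewrite e5; apply: le_trans hA; apply: lerB => //.
move: hK hN hQ; generalize ((K.*2)%:R * W) (eps * n%:R * W) (eps * (q%:R * W)) (eps * X).
move=> a b c d; lra.
Qed.
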